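(* Let $a < b$ be real, $\mathcal{P} = [a,b]$, and let $A_1, A_2 \in \mathbb{R}^{n\times n}$, $B \in \mathbb{R}^{n \times n_i}$, $C \in \mathbb{R}^{n_o \times n}$ define the full-order output $y(\mathsf{p}) = C(A_1 + \mathsf{p}A_2)^{-1}B$, and suppose $y(\mathsf{p}) = \Phi_0 + \sum_{i=1}^{n} \frac{\Phi_i}{\mathsf{p} - \nu_i}$ with constant matrices $\Phi_0, \Phi_i \in \mathbb{R}^{n_o\times n_i}$ and pairwise distinct poles $\nu_i \in \mathbb{R} \setminus [a,b]$. For real matrices $\hat{A}_1, \hat{A}_2 \in \mathbb{R}^{r\times r}$, $\hat{B} \in \mathbb{R}^{r \times n_i}$, $\hat{C} \in \mathbb{R}^{n_o \times r}$ define the reduced output $\hat{y}(\mathsf{p}) = \hat{C}(\hat{A}_1 + \mathsf{p}\hat{A}_2)^{-1}\hat{B}$, and suppose $\hat{y}(\mathsf{p}) = \sum_{j=1}^{r} \frac{c_j b_j^{T}}{\mathsf{p} - \lambda_j}$ with $c_j \in \mathbb{R}^{n_o}$, $b_j \in \mathbb{R}^{n_i}$ and pairwise distinct $\lambda_j \in \mathbb{R} \setminus [a,b]$. For $\sigma \in \mathbb{R}\setminus\{a,b\}$ define $f_\sigma\colon \mathbb{R}\setminus\{a,b\} \to \mathbb{R}$ by \[ f_\sigma(\mathsf{p}) = \begin{cases} \left( \ln\left|\frac{\mathsf{p} - b}{\mathsf{p} - a}\right| - \ln\left|\frac{\sigma - b}{\sigma - a}\right| \right) \frac{1}{\mathsf{p}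 - \sigma}, & \mathsf{p} \neq \sigma,\\[1ex] \frac{b - a}{(\sigma - a)(\sigma - b)}, & \mathsf{p} = \sigma, \end{cases} \] and define $Y, \hat{Y}$ on $\mathbb{R}\setminus\{a,b\}$ by \[ Y(\mathsf{p}) = \ln\left|\frac{\mathsf{p} - b}{\mathsf{p} - a}\right| \Phi_0 + \sum_{i=1}^{n} f_{\nu_i}(\mathsf{p}) \Phi_i, \qquad \hat{Y}(\mathsf{p}) = \sum_{j=1}^{r} f_{\lambda_j}(\mathsf{p}) c_j b_j^{T}. \] If $\hat{y}$ is an $\mathcal{L}_2$-optimal structured approximation of $y$, then for $k = 1,\dots,r$: \[ Y(\lambda_k) b_k = \hat{Y}(\lambda_k) b_k, \qquad c_k^{T} Y(\lambda_k) = c_k^{T} \hat{Y}(\lambda_k), \qquad c_k^{T} Y'(\lambda_k) b_k = c_k^{T} \hat{Y}'(\lambda_k) b_k. \]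
   Context: ''$\hat{y}$ is an $\mathcal{L}_2$-optimal structured approximation of $y$'' means that the real matrices $(\hat{A}_1, \hat{A}_2, \hat{B}, \hat{C})$ minimize $\int_a^b \|y(\mathsf{p}) - \hat{y}(\mathsf{p})\|_F^2 \, d\mathsf{p}$ over all reduced models of the form $\hat{C}(\hat{A}_1 + \mathsf{p}\hat{A}_2)^{-1}\hat{B}$ of fixed order $r$. The pole-residue form of $\hat{y}$ arises when $\hat{A}_2$ is invertible and $\hat{A}_2^{-1}\hat{A}_1$ has $r$ distinct real eigenvalues (the poles being the $\lambda_j$). $\|\cdot\|_F$ is the Frobenius norm; $Y'$ and $\hat{Y}'$ denote derivatives with respect to $\mathsf{p}$ (both functions are continuously differentiable). *)

(* Defs.v *)
From HB Require Import structures.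
From mathcomp Require Import all_boot all_order all_algebra.
From mathcomp Require Import all_classical all_reals all_analysis.
Set Implicit Arguments. Unset Strict Implicit. Unset Printing Implicit Defensive.
Import Order.TTheory GRing.Theory Num.Theory.
Import numFieldNormedType.Exports.
Local Open Scope classical_set_scope.
Local Open Scope ring_scope.

Section Defs.
Variable R : realType.

Definition frob2 (m n : nat) (M : 'M[R]_(m, n)) : R :=
  \sum_(i < m) \sum_(j < n) (M i j) ^+ 2.

Definition sout (N ni no : nat) (A1 A2 : 'M[R]_N) (B : 'M[R]_(N, ni))
  (C : 'M[R]_(no, N)) (p : R) : 'M[R]_(no, ni) :=
  C *m invmx (A1 + p *: A2) *m B.

Definition L2err (a b : R) (ni no : nat) (y yh : R -> 'M[R]_(no, ni)) : \bar R :=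
  (\int[lebesgue_measure]_(p in `[a, b]) (frob2 (y p - yh p))%:E)%E.

Definition L2_optimal (a b : R) (ni no r : nat) (y : R -> 'M[R]_(no, ni))
  (Ah1 Ah2 : 'M[R]_r) (Bh : 'M[R]_(r, ni)) (Ch : 'M[R]_(no, r)) : Prop :=
  forall (A1' A2' : 'M[R]_r) (B' : 'M[R]_(r, ni)) (C' : 'M[R]_(no, r)),
    (forall p, a <= p <= b -> A1' + p *: A2' \in unitmx) ->
    (L2err a b y (sout Ah1 Ah2 Bh Ch) <= L2err a b y (sout A1' A2' B' C'))%E.

Definition logratio (a b p : R) : R := ln `|(p - b) / (p - a)|.

Definition fsig (a b s p : R) : R :=
  if p == s then (b - a) / ((s - a) * (s - b))
  else (logratio a b p - logratio a b s) / (p - s).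

Definition Yfull (a b : R) (n ni no : nat) (Phi0 : 'M[R]_(no, ni))
  (Phi : 'I_n -> 'M[R]_(no, ni)) (nu : 'I_n -> R) (p : R) : 'M[R]_(no, ni) :=
  logratio a b p *: Phi0 + \sum_(i < n) fsig a b (nu i) p *: Phi i.

Definition Yred (a b : R) (r ni no : nat) (lam : 'I_r -> R)
  (c : 'I_r -> 'cV[R]_no) (bv : 'I_r -> 'cV[R]_ni) (p : R) : 'M[R]_(no, ni) :=
  \sum_(j < r) fsig a b (lam j) p *: (c j *m (bv j)^T).

End Defs.

(* Main.v *)
Require Import Defs.
From HB Require Import structures.
From mathcomp Require Import all_boot all_order all_algebra.
From mathcomp Require Import all_classical all_reals all_analysis.
From mathcomp Require Import ring lra.
Import Order.TTheory GRing.Theory Num.Theory.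
Import numFieldNormedType.Exports.
Local Open Scope classical_set_scope.
Local Open Scope ring_scope.
Set Implicit Arguments. Unset Strict Implicit.

Section S.
Variable R : realType.
Variables a b : R.
Hypothesis hab : a < b.
Local Notation mu := (@lebesgue_measure R).

Definition nice (f : R -> R) := forall x, a <= x <= b -> {for x, continuous f}.
Definition II (f : R -> R) : R := \int[mu]_(x in `[a,b]) f x.

Lemma memab x : (x \in `[a, b]%classic) = (a <= x <= b).
Proof. by apply/idP/idP; rewrite ?in_setE /= in_itv. Qed.

Lemma nice_int f : nice f -> mu.-integrable `[a,b] (EFin \o f).
Proof.
move=> nf; apply: continuous_compact_integrable; first exact: segment_compact.
apply: continuous_in_subspaceT => x; rewrite memab => /nf; exact.
Qed.

Lemma nice_cst k : nice (fun _ => k).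
Proof. by move=> x _; apply: cvg_cst. Qed.
Lemma nice_id : nice id.
Proof. by move=> x _; apply: cvg_id. Qed.
Lemma niceD f g : nice f -> nice g -> nice (fun x => f x + g x).
Proof. by move=> nf ng x hx; apply: continuousD; [exact: nf|exact: ng]. Qed.
Lemma niceN f : nice f -> nice (fun x => - f x).
Proof. by move=> nf x hx; apply: continuousN; exact: nf. Qed.
Lemma niceB f g : nice f -> nice g -> nice (fun x => f x - g x).
Proof. by move=> nf ng; apply: niceD => //; apply: niceN. Qed.
Lemma niceM f g : nice f -> nice g -> nice (fun x => f x * g x).
Proof. by move=> nf ng x hx; apply: continuousM; [exact: nf|exact: ng]. Qed.
Lemma niceV f : nice f -> (forall x, a <= x <= b -> f x != 0) -> nice (fun x => (f x)^-1).
Proof. by move=> nf nz x hx; apply: continuousV; [exact: nz|exact: nf]. Qed.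
Lemma nice_abs f : nice f -> nice (fun x => `|f x|).
Proof. by move=> nf x hx; apply: cvg_norm; exact: nf. Qed.
Lemma nice_sum n (F : 'I_n -> R -> R) : (forall i, nice (F i)) ->
  nice (fun x => \sum_(i < n) F i x).
Proof.
elim: n F => [|n IH] F nF.
  by under eq_fun do rewrite big_ord0; exact: nice_cst.
under eq_fun do rewrite big_ord_recr /=.
apply: niceD; last exact: nF.
exact: (IH (fun i => F (widen_ord _ i))).
Qed.

Lemma II_ext f g : (forall x, a <= x <= b -> f x = g x) -> II f = II g.
Proof. by move=> fg; apply: eq_Rintegral => x; rewrite memab => /fg. Qed.

Lemma II_D f g : nice f -> nice g -> II (fun x => f x + g x) = II f + II g.
Proof. by move=> nf ng; apply: RintegralD => //; apply: nice_int. Qed.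

Lemma II_B f g : nice f -> nice g -> II (fun x => f x - g x) = II f - II g.
Proof. by move=> nf ng; apply: RintegralB => //; apply: nice_int. Qed.

Lemma II_Zl k f : nice f -> II (fun x => k * f x) = k * II f.
Proof. by move=> nf; apply: RintegralZl => //; apply: nice_int. Qed.

Lemma II_Zr k f : nice f -> II (fun x => f x * k) = II f * k.
Proof. by move=> nf; apply: RintegralZr => //; apply: nice_int. Qed.

Lemma II_sum n (F : 'I_n -> R -> R) : (forall i, nice (F i)) ->
  II (fun x => \sum_(i < n) F i x) = \sum_(i < n) II (F i).
Proof.
elim: n F => [|n IH] F nF.
  under [II _]II_ext do rewrite big_ord0.
  rewrite big_ord0 /II Rintegral_cst //= mul0r //.
under [II _]II_ext do rewrite big_ord_recr /=.
rewrite big_ord_recr /= II_D; last exact: nF.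
  by rewrite (IH (fun i => F (widen_ord _ i))).
exact: (@nice_sum _ (fun i => F (widen_ord (leqnSn n) i)) (fun i => nF _)).
Qed.

Lemma II_le f g : nice f -> nice g -> (forall x, a <= x <= b -> f x <= g x) -> II f <= II g.
Proof.
move=> nf ng fg; apply: le_Rintegral => //; try exact: nice_int.
Qed.

Lemma II_abs f : nice f -> `|II f| <= II (fun x => `|f x|).
Proof. by move=> nf; apply: le_normr_Rintegral => //; apply: nice_int. Qed.

Lemma II_ge0 f : (forall x, a <= x <= b -> 0 <= f x) -> 0 <= II f.
Proof. by move=> f0; apply: Rintegral_ge0 => x xab; apply: f0; rewrite -memab; apply/mem_set. Qed.


Definition outside (l : R) := ~~ (a <= l <= b).
Definition dl (l : R) := if l < a then a - l else l - b.

Lemma outsideP l : outside l -> (l < a) \/ (b < l).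
Proof.
rewrite /outside negb_and -!ltNge => /orP[]; [by left|by right].
Qed.

Lemma dl_gt0 l : outside l -> 0 < dl l.
Proof.
move=> /outsideP; rewrite /dl; case: ifP => la []; lra.
Qed.

Lemma dl_le l q : outside l -> a <= q <= b -> dl l <= `|q - l|.
Proof.
move=> /outsideP ol /andP[aq qb]; rewrite /dl; case: ifP => la.
  by rewrite ger0_norm; lra.
rewrite ltr0_norm; case: ol; lra.
Qed.

Lemma outside_shift l t : outside l -> `|t| < dl l -> outside (l + t).
Proof.
move=> ol /ltr_normlP[h1 h2]; move: (ol) => /outsideP ol'.
rewrite /outside negb_and -!ltNge; apply/orP.
move: h1 h2; rewrite /dl; case: ifP => la h1 h2.
  by left; lra.
by right; case: ol'; lra.
Qed.

Lemma sub_neq0 l q : outside l -> a <= q <= b -> q - l != 0.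
Proof.
move=> ol qab; rewrite -normr_gt0; apply: (lt_le_trans _ (dl_le ol qab)).
exact: dl_gt0.
Qed.

Lemma nice_inv l : outside l -> nice (fun q => (q - l)^-1).
Proof.
move=> ol; apply: niceV; first by apply: niceB; [exact: nice_id|exact: nice_cst].
by move=> q; apply: sub_neq0.
Qed.

Lemma inv_bound l q : outside l -> a <= q <= b -> `|(q - l)^-1| <= (dl l)^-1.
Proof.
move=> ol qab; rewrite normfV; rewrite lef_pV2 ?posrE ?dl_gt0 //.
  exact: dl_le.
by rewrite normr_gt0 sub_neq0.
Qed.


Lemma der_lin (s l x : R) : is_derive x 1 (fun q : R => s * (q - l)) s.
Proof.
have h : is_derive x 1 (s \*: (id - cst l)) (s *: (1 - 0)).
  apply: is_deriveZ; apply: is_deriveB.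
have -> : (fun q : R => s * (q - l)) = s \*: (id - cst l) by apply/funext.
by rewrite subr0 [_ *: _]mulr1 in h.
Qed.

Lemma ftc (F f : R -> R) : (forall x, a <= x <= b -> is_derive x 1 F (f x)) ->
  nice f -> II f = F b - F a.
Proof.
move=> dF nf.
have cF : forall x, a <= x <= b -> {for x, continuous F}.
  move=> x /dF [dx _]; apply: differentiable_continuous.
  by apply/derivable1_diffP.
have h := @continuous_FTC2 R f F a b hab.
rewrite /II /Rintegral h //.
- apply: continuous_in_subspaceT => x; rewrite memab => /nf; exact.
- split.
  + move=> x; rewrite in_itv /= => /andP[ax xb].
    by case: (dF x); [rewrite ltW ?ltW|].
  + by apply: cvg_at_right_filter; apply: cF; rewrite lexx ltW.
  + by apply: cvg_at_left_filter; apply: cF; rewrite lexx ltW.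
- move=> x; rewrite in_itv /= => /andP[ax xb].
  by rewrite derive1E; case: (dF x); [rewrite ltW ?ltW|].
Qed.


Lemma der_lnlin (s l x : R) : 0 < s * (x - l) ->
  is_derive x 1 (fun q => ln (s * (q - l))) ((s * (x - l))^-1 * s).
Proof.
move=> h; exact: (@is_derive1_comp R (@ln R) (fun q => s * (q - l)) x _ _
  (is_derive1_ln h) (der_lin s l x)).
Qed.

Lemma I1s s l : outside l -> s * s = 1 -> 0 < s * (a - l) -> 0 < s * (b - l) ->
  II (fun q => (q - l)^-1) = logratio a b l.
Proof.
move=> ol ss pa pb.
have s0 : s != 0 by apply/eqP => s0; move: ss; rewrite s0 mul0r => /eqP; rewrite eq_sym oner_eq0.
have hder : forall x, a <= x <= b -> is_derive x 1 (fun q => ln (s * (q - l))) ((x - l)^-1).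
move=> x /andP[ax xb].
  have px : 0 < s * (x - l).
    have e : s * (x - l) * (b - a) = (b - x) * (s * (a - l)) + (x - a) * (s * (b - l)) by ring.
    have : 0 < s * (x - l) * (b - a).
      rewrite e; have [xb'|bx] := ltrP x b.
        have h1 : 0 < (b - x) * (s * (a - l)) by apply: mulr_gt0; lra.
        have h2 : 0 <= (x - a) * (s * (b - l)) by apply: mulr_ge0; lra.
        lra.
      have h1 : 0 <= (b - x) * (s * (a - l)) by apply: mulr_ge0; lra.
      have h2 : 0 < (x - a) * (s * (b - l)).
        apply: mulr_gt0 => //. clear e ss. Fail lra. rewrite subr_gt0; exact: (lt_le_trans hab bx).
      lra.
    by rewrite pmulr_lgt0 // subr_gt0.
  apply: (is_derive_eq (der_lnlin px)).
  have xl : x - l != 0 by apply: sub_neq0 => //; rewrite ax xb.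
  by field; rewrite s0 xl.
rewrite (ftc hder (nice_inv ol)).
rewrite -ln_div ?posrE // /logratio; congr (ln _).
have al : a - l != 0 by apply: sub_neq0 => //; rewrite lexx ltW.
have e : s * (b - l) / (s * (a - l)) = (l - b) / (l - a).
  by field; rewrite s0 al -opprB oppr_eq0 al.
by rewrite e ger0_norm // -e ltW // divr_gt0.
Qed.


Lemma I1 l : outside l -> II (fun q => (q - l)^-1) = logratio a b l.
Proof.
move=> ol; case: (outsideP ol) => hl.
  have pa : 0 < 1 * (a - l) by rewrite mul1r subr_gt0.
  have pb : 0 < 1 * (b - l) by rewrite mul1r subr_gt0 (lt_trans hl hab).
  exact: (@I1s 1 l ol (mulr1 1) pa pb).
have pa : 0 < -1 * (a - l) by rewrite mulN1r oppr_gt0 subr_lt0 (lt_trans hab hl).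
have pb : 0 < -1 * (b - l) by rewrite mulN1r oppr_gt0 subr_lt0.
have ss : (-1 : R) * -1 = 1 by rewrite mulrNN mulr1.
exact: (@I1s (-1) l ol ss pa pb).
Qed.

Lemma I2 nu l : outside nu -> outside l ->
  II (fun q => (q - nu)^-1 * (q - l)^-1) = fsig a b nu l.
Proof.
move=> onu ol; rewrite /fsig; case: eqP => [<-|lnu].
  have hder : forall x, a <= x <= b ->
      is_derive x 1 (fun q => - (q - l)^-1) ((x - l)^-1 * (x - l)^-1).
    move=> x xab; have xl := sub_neq0 ol xab.
    have h1 : is_derive x 1 (fun q : R => 1 * (q - l)) 1 := der_lin 1 l x.
    have h2 := is_deriveV (f := fun q : R => 1 * (q - l)) (x := x) (t := 1) (v := 1).
    rewrite mul1r in h2; have h3 := is_deriveN (h2 xl h1).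
    have -> : (fun q : R => - (q - l)^-1) = - (fun q : R => (1 * (q - l))^-1).
      by apply/funext => q; rewrite -[RHS]/(- (1 * (q - l))^-1) mul1r.
    apply: (is_derive_eq h3).
    by rewrite [_ *: _]mulr1 opprK expr2 invfM.
  rewrite (ftc hder); last by apply: niceM; apply: nice_inv.
  have al : a - l != 0 by apply: sub_neq0 => //; rewrite lexx ltW.
  have bl : b - l != 0 by apply: sub_neq0 => //; rewrite lexx ltW.
  have la : l - a != 0 by rewrite -opprB oppr_eq0.
  have lb : l - b != 0 by rewrite -opprB oppr_eq0.
  by field; rewrite la lb al bl.
have ln0 : l - nu != 0 by rewrite subr_eq0; apply/eqP.
rewrite (@II_ext _ (fun q => (l - nu)^-1 * ((q - l)^-1 - (q - nu)^-1))).
  rewrite II_Zl; last by apply: niceB; apply: nice_inv.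
  rewrite II_B; [by rewrite !I1 // mulrC| |]; exact: nice_inv.
move=> q qab; have ql := sub_neq0 ol qab; have qn := sub_neq0 onu qab.
by field; rewrite ql qn ln0.
Qed.


Lemma outside_shift2 l t : outside l -> `|t| <= dl l / 2 -> outside (l + t).
Proof.
move=> ol ht; apply: outside_shift => //; apply: (le_lt_trans ht).
by rewrite ltr_pdivrMr // ltr_pMr ?dl_gt0 // ltr1n.
Qed.

Lemma inv_bound2 l t q : outside l -> `|t| <= dl l / 2 -> a <= q <= b ->
  `|(q - (l + t))^-1| <= 2 / dl l.
Proof.
move=> ol ht qab; have d0 := dl_gt0 ol.
have ol' := outside_shift2 ol ht.
have h : dl l / 2 <= `|q - (l + t)|.
  have := lerB_dist (q - l) t; rewrite opprD addrA.
  have := dl_le ol qab; lra.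
rewrite normfV -invf_div lef_pV2 ?posrE // ?divr_gt0 //.
by rewrite normr_gt0 sub_neq0.
Qed.

Lemma nice_inv2 l t : outside l -> `|t| <= dl l / 2 -> nice (fun q => (q - (l + t))^-1).
Proof. by move=> ol ht; apply: nice_inv; apply: outside_shift2. Qed.

Lemma CE psi l t : nice psi -> outside l -> `|t| <= dl l / 2 ->
  `|II (fun q => psi q * (q - (l + t))^-1) - II (fun q => psi q * (q - l)^-1)|
  <= `|t| * II (fun q => `|psi q| * (2 / dl l ^+ 2)).
Proof.
move=> np ol ht; have d0 := dl_gt0 ol; have ol' := outside_shift2 ol ht.
rewrite -II_B; [|by apply: niceM => //; apply: nice_inv|by apply: niceM => //; apply: nice_inv].
rewrite (@II_ext _ (fun q => t * (psi q * ((q - (l + t))^-1 * (q - l)^-1)))); last first.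
  move=> q qab; have h1 := sub_neq0 ol qab; have h2 := sub_neq0 ol' qab.
  by field; rewrite h1 h2.
have nf : nice (fun q => psi q * ((q - (l + t))^-1 * (q - l)^-1)).
  by apply: niceM => //; apply: niceM; apply: nice_inv.
rewrite II_Zl // normrM ler_wpM2l //.
apply: (le_trans (II_abs nf)); apply: II_le.
- exact: nice_abs.
- by apply: niceM; [apply: nice_abs|apply: nice_cst].
move=> q qab; rewrite !normrM ler_wpM2l //.
have := inv_bound2 ol ht qab; have := inv_bound ol qab.
have -> : 2 / dl l ^+ 2 = (2 / dl l) * (dl l)^-1 by rewrite expr2 invfM mulrA.
move=> h1 h2; apply: ler_pM => //.
Qed.


Lemma is_derive_of_cvg (f : R -> R) x L :
  (fun h => h^-1 *: ((f \o shift x) (h *: 1) - f x)) @ 0^' --> L ->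
  is_derive x 1 f L.
Proof.
move=> cv; apply: DeriveDef; first by apply/cvg_ex; exists L.
by rewrite /derive; apply: cvg_lim.
Qed.

Definition Fp (phi : R -> R) (p : R) := II (fun q => phi q * (q - p)^-1).

Lemma derA phi l : nice phi -> outside l ->
  is_derive l 1 (Fp phi) (II (fun q => phi q * ((q - l)^-1 * (q - l)^-1))).
Proof.
move=> np ol; apply: is_derive_of_cvg.
have d0 := dl_gt0 ol.
pose psi q := phi q * (q - l)^-1.
have npsi : nice psi by apply: niceM => //; apply: nice_inv.
pose C := II (fun q => `|psi q| * (2 / dl l ^+ 2)).
have C0 : 0 <= C.
  by apply: II_ge0 => q _; apply: mulr_ge0 => //; apply: divr_ge0 => //; apply: ltW; rewrite exprn_gt0.
have eL : II (fun q => phi q * ((q - l)^-1 * (q - l)^-1)) = II (fun q => psi q * (q - l)^-1).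
  by apply: II_ext => q _; rewrite /psi mulrA.
rewrite eL; apply/cvgrPdist_le => e e0.
have m0 : 0 < Num.min (dl l / 2) (e / (C + 1)).
  by rewrite lt_min divr_gt0 //= divr_gt0 // ltr_pwDr.
near=> h.
have h0 : h != 0 by near: h; exact: nbhs_dnbhs_neq.
have hm : `|h| < Num.min (dl l / 2) (e / (C + 1)) by near: h; exact: dnbhs0_lt.
move: hm; rewrite lt_min => /andP[hd he].
have ht : `|h| <= dl l / 2 by apply: ltW.
have ol' := outside_shift2 ol ht.
have eQ : h^-1 *: ((Fp phi \o shift l) (h *: 1) - Fp phi l) =
          II (fun q => psi q * (q - (l + h))^-1).
  have -> : (Fp phi \o shift l) (h *: 1) = Fp phi (l + h).
    by rewrite /= /shift [h *: 1]mulr1 addrC.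
  rewrite /Fp -II_B; [|by apply: niceM => //; apply: nice_inv|by apply: niceM => //; apply: nice_inv].
  rewrite -[LHS]/(h^-1 * _) -II_Zl; last by apply: niceB; apply: niceM => //; apply: nice_inv.
  apply: II_ext => q qab; have h1 := sub_neq0 ol qab; have h2 := sub_neq0 ol' qab.
  by rewrite /psi; field; rewrite h1 h2 h0.
rewrite eQ distrC; apply: (le_trans (CE npsi ol ht)).
apply: (le_trans (y := e / (C + 1) * C)).
  by apply: ler_wpM2r => //; apply: ltW.
rewrite -ler_pdivlMl ?invr_gt0 ?divr_gt0 ?ltr_pwDr // invf_div.
by rewrite divfK ?gt_eqF // lerDl.
Unshelve. all: by end_near.
Qed.


Lemma near_outside l : outside l -> \forall p \near l, outside p.
Proof.
move=> ol; case: (outsideP ol) => hl.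
  near=> p; have pa : p < a by near: p; apply: lt_nbhsl.
  by rewrite /outside negb_and -ltNge pa.
near=> p; have pb : b < p by near: p; apply: lt_nbhsr.
by rewrite /outside negb_and -!ltNge pb orbT.
Unshelve. all: by end_near.
Qed.

Lemma der_logratio l : outside l ->
  is_derive l 1 (logratio a b) (II (fun q => 1 * ((q - l)^-1 * (q - l)^-1))).
Proof.
move=> ol; apply: (@near_eq_is_derive _ _ _ (Fp (fun _ => 1))); last first.
  by apply: derA => //; apply: nice_cst.
near=> p; rewrite /Fp -I1; last by near: p; apply: near_outside.
by apply: II_ext => q _; rewrite mul1r.
Unshelve. all: by end_near.
Qed.

Lemma der_fsig nu l : outside nu -> outside l ->
  is_derive l 1 (fsig a b nu) (II (fun q => (q - nu)^-1 * ((q - l)^-1 * (q - l)^-1))).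
Proof.
move=> onu ol; apply: (@near_eq_is_derive _ _ _ (Fp (fun q => (q - nu)^-1))); last first.
  by apply: derA => //; apply: nice_inv.
near=> p; rewrite /Fp -I2 //; near: p; apply: near_outside.
Unshelve. all: by end_near.
Qed.

Lemma derZM (V : normedModType R) (g : R -> R) (x dg : R) (M : V) :
  is_derive x 1 g dg -> is_derive x 1 (fun p => g p *: M) (dg *: M).
Proof.
case=> dgx <-.
have cv : (fun h : R => h^-1 *: (((fun p => g p *: M) \o shift x) (h *: 1) - g x *: M))
    @ 0^' --> 'D_1 g x *: M.
  have -> : (fun h : R => h^-1 *: (((fun p => g p *: M) \o shift x) (h *: 1) - g x *: M)) =
      (fun h : R => (h^-1 *: ((g \o shift x) (h *: 1) - g x)) *: M).
    by apply/funext => h; rewrite /= -scalerBl scalerA.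
  by apply: cvgZr_tmp; exact: dgx.
apply: DeriveDef; first by apply/cvg_ex; eexists; exact: cv.
by rewrite /derive; apply: cvg_lim.
Qed.


Definition inner m n (X Y : 'M[R]_(m, n)) := \sum_(i < m) \sum_(j < n) X i j * Y i j.

Lemma frob2_expand m n (X D : 'M[R]_(m, n)) t :
  frob2 (X - t *: D) = frob2 X - 2 * t * inner X D + t ^+ 2 * frob2 D.
Proof.
rewrite /frob2 /inner !mulr_sumr -sumrB -big_split /=; apply: eq_bigr => i _.
rewrite !mulr_sumr -sumrB -big_split /=; apply: eq_bigr => j _.
rewrite !mxE; ring.
Qed.

Lemma inner_scale m n (X N : 'M[R]_(m, n)) s : inner X (s *: N) = s * inner X N.
Proof.
rewrite /inner mulr_sumr; apply: eq_bigr => i _; rewrite mulr_sumr; apply: eq_bigr => j _.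
by rewrite mxE mulrCA.
Qed.

Lemma frob2_scale m n (N : 'M[R]_(m, n)) s : frob2 (s *: N) = s ^+ 2 * frob2 N.
Proof.
rewrite /frob2 mulr_sumr; apply: eq_bigr => i _; rewrite mulr_sumr; apply: eq_bigr => j _.
by rewrite mxE exprMn.
Qed.

Lemma frob2_ge0 m n (N : 'M[R]_(m, n)) : 0 <= frob2 N.
Proof. by apply: sumr_ge0 => i _; apply: sumr_ge0 => j _; apply: sqr_ge0. Qed.

Lemma nice_ext f g : (forall x, f x = g x) -> nice f -> nice g.
Proof. by move=> fg; rewrite (_ : f = g) //; apply/funext. Qed.

Definition mnice m n (F : R -> 'M[R]_(m, n)) := forall i j, nice (fun q => F q i j).

Lemma mnice_cst m n (M : 'M[R]_(m, n)) : mnice (fun _ => M).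
Proof. by move=> i j; apply: nice_cst. Qed.

Lemma mnice_add m n (F G : R -> 'M[R]_(m, n)) : mnice F -> mnice G -> mnice (fun q => F q + G q).
Proof.
move=> nF nG i j; apply: (@nice_ext (fun q => F q i j + G q i j)) => [q|]; first by rewrite mxE.
exact: niceD.
Qed.

Lemma mnice_sub m n (F G : R -> 'M[R]_(m, n)) : mnice F -> mnice G -> mnice (fun q => F q - G q).
Proof.
move=> nF nG i j; apply: (@nice_ext (fun q => F q i j - G q i j)) => [q|]; first by rewrite !mxE.
exact: niceB.
Qed.

Lemma mnice_scl m n (g : R -> R) (F : R -> 'M[R]_(m, n)) : nice g -> mnice F ->
  mnice (fun q => g q *: F q).
Proof.
move=> ng nF i j; apply: (@nice_ext (fun q => g q * F q i j)) => [q|]; first by rewrite mxE.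
exact: niceM.
Qed.

Lemma mnice_sum m n k (F : 'I_k -> R -> 'M[R]_(m, n)) : (forall l, mnice (F l)) ->
  mnice (fun q => \sum_(l < k) F l q).
Proof.
move=> nF i j; apply: (@nice_ext (fun q => \sum_(l < k) F l q i j)) => [q|].
  by rewrite summxE.
by apply: nice_sum => l; apply: nF.
Qed.

Lemma nice_frob2 m n (F : R -> 'M[R]_(m, n)) : mnice F -> nice (fun q => frob2 (F q)).
Proof.
move=> nF; apply: nice_sum => i; apply: nice_sum => j.
apply: (@nice_ext (fun q => F q i j * F q i j)) => [q|]; first by rewrite expr2.
by apply: niceM; apply: nF.
Qed.

Lemma nice_inner m n (F G : R -> 'M[R]_(m, n)) : mnice F -> mnice G ->
  nice (fun q => inner (F q) (G q)).
Proof.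
move=> nF nG; apply: nice_sum => i; apply: nice_sum => j.
by apply: niceM; [apply: nF|apply: nG].
Qed.

Lemma II_frob_expand m n (E D : R -> 'M[R]_(m, n)) t : mnice E -> mnice D ->
  II (fun q => frob2 (E q - t *: D q)) =
  II (fun q => frob2 (E q)) - 2 * t * II (fun q => inner (E q) (D q)) +
  t ^+ 2 * II (fun q => frob2 (D q)).
Proof.
move=> nE nD; rewrite (@II_ext _ (fun q => (frob2 (E q) - 2 * t * inner (E q) (D q)) +
    t ^+ 2 * frob2 (D q))); last by move=> q _; rewrite frob2_expand.
have n1 := nice_frob2 nE; have n2 := nice_inner nE nD; have n3 := nice_frob2 nD.
rewrite II_D; last by apply: niceM => //; apply: nice_cst.
  by rewrite II_B ?II_Zl //; apply: niceM => //; apply: nice_cst.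
by apply: niceB => //; apply: niceM => //; apply: nice_cst.
Qed.



Lemma small_zero (x M d : R) : 0 < d -> 0 <= M ->
  (forall s, 0 < s -> s <= d -> `|x| <= s * M) -> x = 0.
Proof.
move=> d0 M0 h; apply/eqP; apply/negP => /negP x0.
have xp : 0 < `|x| by rewrite normr_gt0.
have M1 : 0 < M + 1 by rewrite ltr_pwDr.
pose s := Num.min d (`|x| / (M + 1)).
have s0 : 0 < s by rewrite /s lt_min d0 divr_gt0.
have sd : s <= d by rewrite /s ge_min lexx.
have := h s s0 sd.
have : s * M <= `|x| / (M + 1) * M by apply: ler_wpM2r => //; rewrite /s ge_min lexx orbT.
have : `|x| / (M + 1) * M < `|x|.
  by rewrite mulrAC ltr_pdivrMr // ltr_pM2l // ltrDl.
move=> h1 h2 h3; have := le_lt_trans (le_trans h3 h2) h1; by rewrite ltxx.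
Qed.

Lemma limit_lemma (E0 J0 K C d : R) : 0 < d -> 0 <= C -> 0 <= K ->
  (forall t, 0 < `|t| -> `|t| <= d -> exists J Q,
     E0 <= E0 - 2 * t * J + t ^+ 2 * Q /\ Q <= K /\ `|J - J0| <= `|t| * C) ->
  J0 = 0.
Proof.
move=> d0 C0 K0 h; apply: (@small_zero _ (K / 2 + C) d) => //.
  by apply: addr_ge0 => //; apply: divr_ge0.
move=> s s0 sd.
have e1 : 0 < `|s| by rewrite gtr0_norm.
have e2 : `|s| <= d by rewrite gtr0_norm.
have e3 : 0 < `|- s| by rewrite normrN gtr0_norm.
have e4 : `|- s| <= d by rewrite normrN gtr0_norm.
have [J1 [Q1 [h1 [h1' h1'']]]] := h s e1 e2.
have [J2 [Q2 [h2 [h2' h2'']]]] := h (- s) e3 e4.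
rewrite [`|s|]gtr0_norm // in h1''; rewrite normrN [`|s|]gtr0_norm // in h2''.
have a1 : 2 * J1 <= s * K.
  have : 0 <= s * (s * Q1 - 2 * J1) by rewrite mulrBr mulrA -expr2; lra.
  rewrite pmulr_rge0 // => hh; have := ler_wpM2l (ltW s0) h1'; lra.
have a2 : - (2 * J2) <= s * K.
  have : 0 <= s * (s * Q2 + 2 * J2) by rewrite mulrDr mulrA -expr2 -sqrrN; lra.
  rewrite pmulr_rge0 // => hh; have := ler_wpM2l (ltW s0) h2'; lra.
move: h1'' h2''; rewrite !ler_norml => /andP[b1 b2] /andP[b3 b4].
apply/andP; split; lra.
Qed.

Section Prob.
Variables (n ni no r : nat) (Phi0 : 'M[R]_(no, ni)) (Phi : 'I_n -> 'M[R]_(no, ni))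
  (nu : 'I_n -> R).
Hypothesis hnu : forall i, outside (nu i).
Variables (lam : 'I_r -> R) (c : 'I_r -> 'cV[R]_no) (bv : 'I_r -> 'cV[R]_ni).
Hypothesis hlam : forall j, outside (lam j).

Definition Yf q : 'M[R]_(no, ni) := Phi0 + \sum_(i < n) (q - nu i)^-1 *: Phi i.
Definition model (lam' : 'I_r -> R) (c' : 'I_r -> 'cV[R]_no) (bv' : 'I_r -> 'cV[R]_ni) q
  : 'M[R]_(no, ni) := \sum_(j < r) (q - lam' j)^-1 *: (c' j *m (bv' j)^T).
Definition Err lam' c' bv' := II (fun q => frob2 (Yf q - model lam' c' bv' q)).
Definition EE q := Yf q - model lam c bv q.

Lemma mnice_Yf : mnice Yf.
Proof.
apply: mnice_add; first exact: mnice_cst.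
by apply: mnice_sum => i; apply: mnice_scl; [apply: nice_inv|apply: mnice_cst].
Qed.

Lemma mnice_model lam' c' bv' : (forall j, outside (lam' j)) -> mnice (model lam' c' bv').
Proof.
move=> hl; apply: mnice_sum => j; apply: mnice_scl; [apply: nice_inv|apply: mnice_cst] => //.
Qed.

Lemma mnice_EE : mnice EE.
Proof. by apply: mnice_sub; [apply: mnice_Yf|apply: mnice_model]. Qed.

Lemma outer_entry (u : 'cV[R]_no) (w : 'cV[R]_ni) s t : (u *m w^T) s t = u s 0 * w t 0.
Proof. by rewrite !mxE big_ord1 mxE. Qed.

Lemma Komega (om : R -> R) (u : 'cV[R]_no) (w : 'cV[R]_ni) : nice om ->
  II (fun q => inner (EE q) (om q *: (u *m w^T))) =
  \sum_(s < no) \sum_(t < ni) (u s 0 * w t 0) * II (fun q => EE q s t * om q).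
Proof.
move=> nom.
rewrite (@II_ext _ (fun q => \sum_(s < no) \sum_(t < ni) (u s 0 * w t 0) * (EE q s t * om q))).
  rewrite II_sum; last first.
    move=> s; apply: nice_sum => t; apply: niceM; first exact: nice_cst.
    by apply: niceM => //; apply: mnice_EE.
  apply: eq_bigr => s _; rewrite II_sum; last first.
    move=> t; apply: niceM; first exact: nice_cst.
    by apply: niceM => //; apply: mnice_EE.
  apply: eq_bigr => t _; rewrite II_Zl //.
  by apply: niceM => //; apply: mnice_EE.
move=> q _; rewrite /inner; apply: eq_bigr => s _; apply: eq_bigr => t _.
rewrite [X in _ * X = _]mxE outer_entry; ring.
Qed.

Lemma Eval (om : R -> R) s t : nice om ->
  II (fun q => EE q s t * om q) =
  Phi0 s t * II om + \sum_(i < n) Phi i s t * II (fun q => (q - nu i)^-1 * om q)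
  - \sum_(j < r) (c j *m (bv j)^T) s t * II (fun q => (q - lam j)^-1 * om q).
Proof.
move=> nom.
have ni1 : forall i, nice (fun q => Phi i s t * ((q - nu i)^-1 * om q)).
  by move=> i; apply: niceM; [apply: nice_cst|apply: niceM => //; apply: nice_inv].
have nj1 : forall j, nice (fun q => (c j *m (bv j)^T) s t * ((q - lam j)^-1 * om q)).
  by move=> j; apply: niceM; [apply: nice_cst|apply: niceM => //; apply: nice_inv].
rewrite (@II_ext _ (fun q => (Phi0 s t * om q +
    \sum_(i < n) Phi i s t * ((q - nu i)^-1 * om q)) -
    \sum_(j < r) (c j *m (bv j)^T) s t * ((q - lam j)^-1 * om q))).
  rewrite II_B; last by apply: nice_sum.
    rewrite II_D; last by apply: nice_sum.
      rewrite II_Zl // II_sum // II_sum //; congr (_ + _ - _).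
        by apply: eq_bigr => i _; rewrite II_Zl //; apply: niceM => //; apply: nice_inv.
      by apply: eq_bigr => j _; rewrite II_Zl //; apply: niceM => //; apply: nice_inv.
    by apply: niceM => //; apply: nice_cst.
  by apply: niceD; [apply: niceM => //; apply: nice_cst|apply: nice_sum].
move=> q _; rewrite /EE /Yf /model !mxE !summxE mulrBl mulrDl !mulr_suml.
congr (_ + _ - _).
  by apply: eq_bigr => i _; rewrite mxE; ring.
by apply: eq_bigr => j _; rewrite mxE; ring.
Qed.


Definition Dfull l : 'M[R]_(no, ni) :=
  II (fun q => 1 * ((q - l)^-1 * (q - l)^-1)) *: Phi0 +
  \sum_(i < n) II (fun q => (q - nu i)^-1 * ((q - l)^-1 * (q - l)^-1)) *: Phi i.
Definition Dred l : 'M[R]_(no, ni) :=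
  \sum_(j < r) II (fun q => (q - lam j)^-1 * ((q - l)^-1 * (q - l)^-1)) *: (c j *m (bv j)^T).

Lemma der_Yfull l : outside l -> is_derive l 1 (Yfull a b Phi0 Phi nu) (Dfull l).
Proof.
move=> ol.
have -> : Yfull a b Phi0 Phi nu = (fun p => logratio a b p *: Phi0) +
    \sum_(i < n) (fun p => fsig a b (nu i) p *: Phi i).
  by apply/funext => p; rewrite /Yfull /= fct_sumE.
apply: is_deriveD; first by apply: derZM; apply: der_logratio.
by apply: is_derive_sum => i; apply: derZM; apply: der_fsig.
Qed.

Lemma der_Yred l : outside l -> is_derive l 1 (Yred a b lam c bv) (Dred l).
Proof.
move=> ol.
have -> : Yred a b lam c bv = \sum_(j < r) (fun p => fsig a b (lam j) p *: (c j *m (bv j)^T)).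
  by apply/funext => p; rewrite /Yred fct_sumE.
by apply: is_derive_sum => j; apply: derZM; apply: der_fsig.
Qed.

Lemma E1 l s t : outside l ->
  II (fun q => EE q s t * (q - l)^-1) = (Yfull a b Phi0 Phi nu l - Yred a b lam c bv l) s t.
Proof.
move=> ol; rewrite Eval; last exact: nice_inv.
rewrite I1 // /Yfull /Yred !mxE !summxE; congr (_ + _ - _).
- by rewrite mulrC.
- by apply: eq_bigr => i _; rewrite I2 // mxE mulrC.
- by apply: eq_bigr => j _; rewrite I2 // [RHS]mxE mulrC.
Qed.

Lemma E2 l s t : outside l ->
  II (fun q => EE q s t * ((q - l)^-1 * (q - l)^-1)) = (Dfull l - Dred l) s t.
Proof.
move=> ol; rewrite Eval; last by apply: niceM; apply: nice_inv.
rewrite /Dfull /Dred !mxE !summxE; congr (_ + _ - _).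
- by rewrite mulrC; congr (_ * _); apply: II_ext => q _; rewrite mul1r.
- by apply: eq_bigr => i _; rewrite mxE mulrC.
- by apply: eq_bigr => j _; rewrite [RHS]mxE mulrC.
Qed.


Lemma realize (lam' : 'I_r -> R) (c' : 'I_r -> 'cV[R]_no) (bv' : 'I_r -> 'cV[R]_ni) :
  (forall j, outside (lam' j)) ->
  forall p, a <= p <= b ->
  diag_mx (\row_j (- lam' j)) + p *: (1%:M : 'M[R]_r) \in unitmx /\
  sout (diag_mx (\row_j (- lam' j))) 1%:M (\matrix_(j, t) bv' j t 0)
       (\matrix_(s, j) c' j s 0) p = model lam' c' bv' p.
Proof.
move=> hl p pab.
have nz : forall j, p - lam' j != 0 by move=> j; apply: sub_neq0.
have eD : diag_mx (\row_j (- lam' j)) + p *: (1%:M : 'M[R]_r) = diag_mx (\row_j (p - lam' j)).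
  apply/matrixP => i j; rewrite !mxE; case: eqP => [->|_] /=; first by rewrite mulr1 addrC.
  by rewrite mulr0 addr0.
pose N := diag_mx (\row_j (p - lam' j)^-1).
have DN : diag_mx (\row_j (p - lam' j)) *m N = 1%:M.
  apply/matrixP => i j; rewrite mul_diag_mx !mxE; case: eqP => [->|_] /=.
    by rewrite mulr1n mulfV.
  by rewrite mulr0n mulr0.
have [uD _] := mulmx1_unit DN.
rewrite eD; split => //.
have iD : invmx (diag_mx (\row_j (p - lam' j))) = N.
  by rewrite -[LHS]mulmx1 -DN mulmxA mulVmx // mul1mx.
rewrite /sout eD iD /N mul_mx_diag; apply/matrixP => s t.
rewrite !mxE summxE; apply: eq_bigr => j _; rewrite !mxE big_ord1 !mxE; ring.
Qed.


Lemma L2err_eq (y yh G : R -> 'M[R]_(no, ni)) : mnice G ->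
  (forall p, a <= p <= b -> y p - yh p = G p) ->
  L2err a b y yh = (II (fun q => frob2 (G q)))%:E.
Proof.
move=> nG hG; rewrite /L2err.
have -> : (\int[lebesgue_measure]_(p in `[a, b]) (frob2 (y p - yh p))%:E)%E =
    (\int[lebesgue_measure]_(p in `[a, b]) (frob2 (G p))%:E)%E.
  by apply: eq_integral => q; rewrite memab => /hG ->.
rewrite /II /Rintegral fineK //.
exact: (integrable_fin_num _ (nice_int (nice_frob2 nG))).
Qed.

Lemma opt_transfer (A1 A2 : 'M[R]_n) (B : 'M[R]_(n, ni)) (C : 'M[R]_(no, n))
  (Ah1 Ah2 : 'M[R]_r) (Bh : 'M[R]_(r, ni)) (Ch : 'M[R]_(no, r)) :
  (forall p, a <= p <= b ->
     A1 + p *: A2 \in unitmx /\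
     sout A1 A2 B C p = Phi0 + \sum_(i < n) (p - nu i)^-1 *: Phi i) ->
  (forall p, a <= p <= b ->
     Ah1 + p *: Ah2 \in unitmx /\
     sout Ah1 Ah2 Bh Ch p = \sum_(j < r) (p - lam j)^-1 *: (c j *m (bv j)^T)) ->
  L2_optimal a b (sout A1 A2 B C) Ah1 Ah2 Bh Ch ->
  forall lam' c' bv', (forall j, outside (lam' j)) -> Err lam c bv <= Err lam' c' bv'.
Proof.
move=> hy hyh hopt lam' c' bv' hl.
have := hopt _ _ (\matrix_(j, t) bv' j t 0) (\matrix_(s, j) c' j s 0)
  (fun p pab => (realize c' bv' hl pab).1).
rewrite (@L2err_eq _ _ EE mnice_EE); last first.
  by move=> p pab; rewrite (hy p pab).2 (hyh p pab).2.
rewrite (@L2err_eq _ _ (fun q => Yf q - model lam' c' bv' q)); last first.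
  by move=> p pab; rewrite (hy p pab).2 (realize c' bv' hl pab).2.
  by apply: mnice_sub; [apply: mnice_Yf|apply: mnice_model].
by rewrite lee_fin.
Qed.


Lemma dir0 (E0 J Q : R) : 0 <= Q -> (forall t, E0 <= E0 - 2 * t * J + t ^+ 2 * Q) -> J = 0.
Proof.
move=> Q0 /(_ (J / (Q + 1))) h.
have Q1 : Q + 1 != 0 by rewrite gt_eqF // ltr_pwDr.
have e : E0 - 2 * (J / (Q + 1)) * J + (J / (Q + 1)) ^+ 2 * Q =
    E0 - (J / (Q + 1)) ^+ 2 * (Q + 2) by field.
rewrite e in h.
have h2 : (J / (Q + 1)) ^+ 2 * (Q + 2) <= 0 by lra.
have h3 : (J / (Q + 1)) ^+ 2 <= 0.
  have t0 := sqr_ge0 (J / (Q + 1)); have t1 := mulr_ge0 t0 Q0; nra.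
have : J / (Q + 1) = 0.
  by apply/eqP; rewrite -sqrf_eq0 eq_le h3 sqr_ge0.
by move/eqP; rewrite mulf_eq0 invr_eq0 (negPf Q1) orbF => /eqP.
Qed.

Hypothesis hopt : forall lam' c' bv', (forall j, outside (lam' j)) ->
  Err lam c bv <= Err lam' c' bv'.

Lemma dir_lemma (D : R -> 'M[R]_(no, ni)) : mnice D ->
  (forall t, exists lam' c' bv', (forall j, outside (lam' j)) /\
     forall q, a <= q <= b -> model lam' c' bv' q = model lam c bv q + t *: D q) ->
  II (fun q => inner (EE q) (D q)) = 0.
Proof.
move=> nD hm; apply: (@dir0 (II (fun q => frob2 (EE q))) _ (II (fun q => frob2 (D q)))).
  by apply: II_ge0 => q _; apply: frob2_ge0.
move=> t; have [lam' [c' [bv' [hl hq]]]] := hm t.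
have := hopt c' bv' hl; rewrite /Err.
rewrite (@II_ext (fun q => frob2 (Yf q - model lam' c' bv' q)) (fun q => frob2 (EE q - t *: D q))).
  by rewrite II_frob_expand //; apply: mnice_EE.
by move=> q qab; rewrite hq // /EE opprD addrA.
Qed.


Lemma cpert k (u : 'cV[R]_no) :
  II (fun q => inner (EE q) ((q - lam k)^-1 *: (u *m (bv k)^T))) = 0.
Proof.
apply: dir_lemma; first by apply: mnice_scl; [apply: nice_inv|apply: mnice_cst].
move=> t; exists lam, (fun j => if j == k then c k + t *: u else c j), bv; split => // q _.
rewrite /model (bigD1 k) //= [in RHS](bigD1 k) //= eqxx.
have -> : \sum_(j < r | j != k) (q - lam j)^-1 *:
    ((if j == k then c k + t *: u else c j) *m (bv j)^T) =
    \sum_(j < r | j != k) (q - lam j)^-1 *: (c j *m (bv j)^T).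
  by apply: eq_bigr => j /negPf ->.
rewrite mulmxDl -scalemxAl scalerDr addrAC; congr (_ + _).
by rewrite !scalerA mulrC.
Qed.

Lemma bpert k (w : 'cV[R]_ni) :
  II (fun q => inner (EE q) ((q - lam k)^-1 *: (c k *m w^T))) = 0.
Proof.
apply: dir_lemma; first by apply: mnice_scl; [apply: nice_inv|apply: mnice_cst].
move=> t; exists lam, c, (fun j => if j == k then bv k + t *: w else bv j); split => // q _.
rewrite /model (bigD1 k) //= [in RHS](bigD1 k) //= eqxx.
have -> : \sum_(j < r | j != k) (q - lam j)^-1 *:
    (c j *m (if j == k then bv k + t *: w else bv j)^T) =
    \sum_(j < r | j != k) (q - lam j)^-1 *: (c j *m (bv j)^T).
  by apply: eq_bigr => j /negPf ->.
rewrite linearD linearZ /= mulmxDr -scalemxAr scalerDr addrAC; congr (_ + _).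
by rewrite !scalerA mulrC.
Qed.


Lemma lpert k :
  II (fun q => inner (EE q) (((q - lam k)^-1 * (q - lam k)^-1) *: (c k *m (bv k)^T))) = 0.
Proof.
have ol := hlam k; have d0 := dl_gt0 ol.
pose psi q := inner (EE q) ((q - lam k)^-1 *: (c k *m (bv k)^T)).
have npsi : nice psi := nice_inner mnice_EE (mnice_scl (nice_inv ol) (@mnice_cst _ _ _)).
have -> : II (fun q => inner (EE q) (((q - lam k)^-1 * (q - lam k)^-1) *: (c k *m (bv k)^T))) =
    II (fun q => psi q * (q - lam k)^-1).
  by apply: II_ext => q _; rewrite /psi !inner_scale; ring.
apply: (@limit_lemma (II (fun q => frob2 (EE q))) _
   (II (fun _ => frob2 (c k *m (bv k)^T) * (2 / dl (lam k) * (dl (lam k))^-1) ^+ 2))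
   (II (fun q => `|psi q| * (2 / dl (lam k) ^+ 2))) (dl (lam k) / 2)).
- by apply: divr_gt0.
- apply: II_ge0 => q _; apply: mulr_ge0 => //; apply: divr_ge0 => //.
  by apply: exprn_ge0; apply: ltW.
- by apply: II_ge0 => q _; apply: mulr_ge0; [apply: frob2_ge0|apply: sqr_ge0].
move=> t t0 td.
pose g q := ((q - (lam k + t))^-1 * (q - lam k)^-1) *: (c k *m (bv k)^T).
have ng : mnice g := mnice_scl (niceM (nice_inv2 ol td) (nice_inv ol)) (@mnice_cst _ _ _).
exists (II (fun q => inner (EE q) (g q))), (II (fun q => frob2 (g q))); split; [|split].
- pose lam' j := if j == k then lam k + t else lam j.
  have hl' : forall j, outside (lam' j).
    by move=> j; rewrite /lam'; case: eqP => _; [apply: outside_shift2|apply: hlam].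
  have := hopt c bv hl'; rewrite /Err.
  rewrite (@II_ext (fun q => frob2 (Yf q - model lam' c bv q)) (fun q => frob2 (EE q - t *: g q))).
    by rewrite II_frob_expand //; apply: mnice_EE.
  move=> q qab; congr frob2.
  have -> : model lam' c bv q = model lam c bv q + t *: g q.
    rewrite /model (bigD1 k) //= [in RHS](bigD1 k) //= /lam' eqxx.
    have -> : \sum_(j < r | j != k) (q - (if j == k then lam k + t else lam j))^-1 *:
        (c j *m (bv j)^T) = \sum_(j < r | j != k) (q - lam j)^-1 *: (c j *m (bv j)^T).
      by apply: eq_bigr => j /negPf ->.
    rewrite addrAC; congr (_ + _).
    rewrite /g scalerA -scalerDl; congr (_ *: _).
    have h1 := sub_neq0 ol qab; have h2 := sub_neq0 (outside_shift2 ol td) qab.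
    by field; rewrite h1 h2.
  by rewrite /EE opprD addrA.
- apply: II_le.
  + exact: nice_frob2.
  + exact: nice_cst.
  move=> q qab; rewrite /g frob2_scale mulrC ler_wpM2l //; first exact: frob2_ge0.
  rewrite -real_normK ?num_real // [in X in _ <= X]expr2 expr2 normrM.
  have h1 := inv_bound2 ol td qab; have h2 := inv_bound ol qab.
  have b0 : 0 <= 2 / dl (lam k) * (dl (lam k))^-1.
    by apply: mulr_ge0; [apply: divr_ge0|rewrite invr_ge0]; apply: ltW.
  by apply: ler_pM => //; apply: ler_pM.
- rewrite (@II_ext (fun q => inner (EE q) (g q)) (fun q => psi q * (q - (lam k + t))^-1)).
    exact: CE.
  by move=> q _; rewrite /g /psi !inner_scale; ring.
Qed.


Lemma key1 (om : R -> R) (u : 'cV[R]_no) (w : 'cV[R]_ni) : nice om ->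
  II (fun q => inner (EE q) (om q *: (u *m w^T))) =
  \sum_(s < no) u s 0 * \sum_(t < ni) w t 0 * II (fun q => EE q s t * om q).
Proof.
move=> nom; rewrite Komega //; apply: eq_bigr => s _; rewrite mulr_sumr.
by apply: eq_bigr => t _; rewrite mulrA [u s 0 * _]mulrC.
Qed.

Lemma delta_sum m (F : 'I_m -> R) s :
  \sum_(s' < m) (\col_i ((i == s)%:R) : 'cV[R]_m) s' 0 * F s' = F s.
Proof.
rewrite (bigD1 s) //= mxE eqxx mul1r big1 ?addr0 // => s' /negPf hs.
by rewrite mxE hs mul0r.
Qed.

Lemma bilin (u : 'cV[R]_no) (X : 'M[R]_(no, ni)) (w : 'cV[R]_ni) :
  ((u^T *m X) *m w) 0 0 = \sum_(s < no) u s 0 * \sum_(t < ni) w t 0 * X s t.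
Proof.
rewrite mxE; under eq_bigr do rewrite mxE mulr_suml.
rewrite exchange_big /=; apply: eq_bigr => s _; rewrite mulr_sumr.
by apply: eq_bigr => t _; rewrite !mxE; ring.
Qed.

Lemma final k :
  Yfull a b Phi0 Phi nu (lam k) *m bv k = Yred a b lam c bv (lam k) *m bv k /\
  (c k)^T *m Yfull a b Phi0 Phi nu (lam k) = (c k)^T *m Yred a b lam c bv (lam k) /\
  (c k)^T *m derive1 (Yfull a b Phi0 Phi nu) (lam k) *m bv k =
  (c k)^T *m derive1 (Yred a b lam c bv) (lam k) *m bv k.
Proof.
have ol := hlam k.
set X := Yfull a b Phi0 Phi nu (lam k) - Yred a b lam c bv (lam k).
split; [|split].
- apply/eqP; rewrite -subr_eq0 -mulmxBl; apply/eqP/matrixP => s j.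
  rewrite [j]ord1 !mxE.
  have := cpert k (\col_i ((i == s)%:R)); rewrite key1; last exact: nice_inv.
  rewrite delta_sum => h; apply: (etrans _ h); apply: eq_bigr => t _.
  by rewrite E1 // mulrC.
- apply/eqP; rewrite -subr_eq0 -mulmxBr; apply/eqP/matrixP => i t.
  rewrite [i]ord1 !mxE.
  have := bpert k (\col_i ((i == t)%:R)); rewrite key1; last exact: nice_inv.
  move=> h; apply: (etrans _ h); apply: eq_bigr => s _; rewrite delta_sum E1 // mxE; done.
- have d1 : derive1 (Yfull a b Phi0 Phi nu) (lam k) = Dfull (lam k).
    by rewrite derive1E; case: (der_Yfull ol).
  have d2 : derive1 (Yred a b lam c bv) (lam k) = Dred (lam k).
    by rewrite derive1E; case: (der_Yred ol).
  rewrite d1 d2; apply/eqP; rewrite -subr_eq0 -mulmxBl -mulmxBr; apply/eqP/matrixP => i j.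
  rewrite [i]ord1 [j]ord1 bilin mxE.
  have := lpert k; rewrite key1; last by apply: niceM; apply: nice_inv.
  move=> h; apply: (etrans _ h); apply: eq_bigr => s _; congr (_ * _); apply: eq_bigr => t _.
  by rewrite E2.
Qed.

End Prob.

End S.

Unset Implicit Arguments. Set Strict Implicit.

Theorem theorem5p1 (R : realType) (a b : R) (n ni no r : nat)
  (A1 A2 : 'M[R]_n) (B : 'M[R]_(n, ni)) (C : 'M[R]_(no, n))
  (Phi0 : 'M[R]_(no, ni)) (Phi : 'I_n -> 'M[R]_(no, ni)) (nu : 'I_n -> R)
  (Ah1 Ah2 : 'M[R]_r) (Bh : 'M[R]_(r, ni)) (Ch : 'M[R]_(no, r))
  (lam : 'I_r -> R) (c : 'I_r -> 'cV[R]_no) (bv : 'I_r -> 'cV[R]_ni) :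
  a < b ->
  injective nu -> (forall i, ~~ (a <= nu i <= b)) ->
  (forall p, a <= p <= b ->
     A1 + p *: A2 \in unitmx /\
     sout A1 A2 B C p = Phi0 + \sum_(i < n) (p - nu i)^-1 *: Phi i) ->
  injective lam -> (forall j, ~~ (a <= lam j <= b)) ->
  (forall p, a <= p <= b ->
     Ah1 + p *: Ah2 \in unitmx /\
     sout Ah1 Ah2 Bh Ch p = \sum_(j < r) (p - lam j)^-1 *: (c j *m (bv j)^T)) ->
  L2_optimal a b (sout A1 A2 B C) Ah1 Ah2 Bh Ch ->
  forall k : 'I_r,
    Yfull a b Phi0 Phi nu (lam k) *m bv k = Yred a b lam c bv (lam k) *m bv k /\
    (c k)^T *m Yfull a b Phi0 Phi nu (lam k) = (c k)^T *m Yred a b lam c bv (lam k) /\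
    (c k)^T *m derive1 (Yfull a b Phi0 Phi nu) (lam k) *m bv k =
    (c k)^T *m derive1 (Yred a b lam c bv) (lam k) *m bv k.
Proof.
move=> hab _ hnu hy _ hlam hyh hopt k.
apply: (final hab hnu hlam _ k).
move=> lam' c' bv' hl.
exact: (opt_transfer hnu hlam hy hyh hopt c' bv' hl).
Qed.
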